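(* Let $X\subseteq\mathbb{R}^n$ be nonempty, closed, convex and bounded; let $F:X\to\mathbb{R}^n$ be $L_F$-Lipschitz continuous and monotone on $X$; let $H:X\to\mathbb{R}^n$ be $L_H$-Lipschitz continuous and monotone on $X$; and assume $\mathrm{SOL}(\mathrm{SOL}(X,F),H)\neq\emptyset$. Given $\gamma>0$, positive scalars $\{\eta_k\}$ and $x_0\in X$, define for $k\ge0$: $y_{k+1}=\Pi_X[x_k-\gamma(F(x_k)+\eta_kH(x_k))]$, $x_{k+1}=\Pi_X[x_k-\gamma(F(y_{k+1})+\eta_kH(y_{k+1}))]$, and $\bar y_K=\frac1K\sum_{k=0}^{K-1}y_{k+1}$. Assume $\gamma^2(L_F^2+\eta_0^2L_H^2)\le0.5$. Case 1 (diminishing regularization): Let $\eta_k=\frac{\eta_0}{(k+1)^b}$ with arbitrary $b\in(0,1)$. Then for all $K\ge2^{1/(1-b)}$: (1-i) $-B_H\,\mathrm{dist}(\bar y_K,\mathrm{SOL}(X,F))\le\mathrm{Gap}(\bar y_K,\mathrm{SOL}(X,F),H)\le\frac{D_X^2}{\gamma\eta_0}\frac{1}{K^{1-b}}$; (1-ii) $0\le\mathrm{Gap}(\bar y_K,X,F)\le\frac{D_X^2}{\gamma}\frac1K+\frac{\sqrt2\,\eta_0C_HD_X}{1-b}\frac1{K^b}$; (1-iii) if moreover $\mathrm{VI}(X,F)$ is $\alpha$-weakly sharp of order $\mathcal{M}$, then $\mathrm{Gap}(\bar y_K,\mathrm{SOL}(X,F),H)\ge -B_H\sqrt[\mathcal{M}]{\alpha^{-1}\left(\frac{D_X^2}{\gamma}\frac1K+\frac{\sqrt2\,C_HD_X\eta_0}{1-b}\frac1{K^b}\right)}$.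 Case 2 (constant regularization): Suppose $\mathrm{VI}(X,F)$ is $\alpha$-weakly sharp of order $\mathcal{M}=1$, and let $\eta_k\equiv\eta$ (so $\eta_0=\eta$) with $\eta\le\frac{\alpha}{2\|H(x^* )\|}$, where $x^*$ is an arbitrary point of $\mathrm{SOL}(\mathrm{SOL}(X,F),H)$. Then for all $K\ge1$: (2-i) $\mathrm{dist}(\bar y_K,\mathrm{SOL}(X,F))\le\frac{\|x_0-x^*\|^2}{\gamma\alpha}\frac1K$; (2-ii) $|\mathrm{Gap}(\bar y_K,\mathrm{SOL}(X,F),H)|\le\max\left\{\frac{D_X^2}{\gamma\eta},\frac{B_H\|x_0-x^*\|^2}{\gamma\alpha}\right\}\frac1K$.
   Context: $\mathrm{SOL}(Y,G)=\{x\in Y: G(x)^\top(y-x)\ge0\ \forall y\in Y\}$. $\mathrm{Gap}(x,Y,G)=\sup_{y\in Y}G(y)^\top(x-y)$. $\Pi_X$ Euclidean projection, $\mathrm{dist}(x,Y)=\|x-\Pi_Y[x]\|$. $D_X^2=\sup_{x,y\in X}\frac12\|x-y\|^2$, $B_H=\sup_{x\in\mathrm{SOL}(X,F)}\|H(x)\|$, $C_H=\sup_{x\in X}\|H(x)\|$. $\mathrm{VI}(X,F)$ is $\alpha$-weakly sharp of order $\mathcal{M}$ if there are $\alpha>0$, $\mathcal{M}\ge1$ with $F(x^* )^\top(x-x^* )\ge\alpha\,\mathrm{dist}^{\mathcal{M}}(x,\mathrm{SOL}(X,F))$ for all $x\in X$, $x^*\in\mathrm{SOL}(X,F)$. *)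

(* Defs.v *)
From mathcomp Require Import all_boot all_order all_algebra.
From mathcomp Require Import all_classical all_reals all_analysis.
Set Implicit Arguments. Unset Strict Implicit. Unset Printing Implicit Defensive.
Import Order.TTheory GRing.Theory Num.Theory.
Local Open Scope classical_set_scope.
Local Open Scope ring_scope.

Section Defs.
Context {R : realType} {n : nat}.
Notation V := 'rV[R]_n.

Definition vi_dotv (u v : V) : R := \sum_(i < n) u 0 i * v 0 i.
Definition vi_enorm (u : V) : R := Num.sqrt (vi_dotv u u).

Definition vi_convex_set (X : set V) : Prop :=
  forall x y t, X x -> X y -> 0 <= t -> t <= 1 -> X (t *: x + (1 - t) *: y).
Definition vi_closed (X : set V) : Prop :=
  forall (u : nat -> V) (z : V), (forall k, X (u k)) ->
    (fun k => vi_enorm (u k - z) : R^o) @ \oo --> (0 : R^o) -> X z.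
Definition vi_bounded (X : set V) : Prop :=
  exists M : R, forall x, X x -> vi_enorm x <= M.

Definition vi_is_proj (X : set V) (z p : V) : Prop :=
  X p /\ forall w, X w -> vi_enorm (z - p) <= vi_enorm (z - w).

Definition vi_lipschitz_on (X : set V) (G : V -> V) (L : R) : Prop :=
  forall x y, X x -> X y -> vi_enorm (G x - G y) <= L * vi_enorm (x - y).
Definition vi_monotone_on (X : set V) (G : V -> V) : Prop :=
  forall x y, X x -> X y -> 0 <= vi_dotv (G x - G y) (x - y).

Definition vi_SOL (Y : set V) (G : V -> V) : set V :=
  [set x | Y x /\ forall y, Y y -> 0 <= vi_dotv (G x) (y - x)].
Definition vi_Gap (x : V) (Y : set V) (G : V -> V) : R :=
  sup [set vi_dotv (G y) (x - y) | y in Y].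
Definition vi_dist (x : V) (Y : set V) : R := inf [set vi_enorm (x - y) | y in Y].
Definition vi_DX2 (X : set V) : R :=
  sup [set 2^-1 * vi_enorm (p.1 - p.2) ^+ 2 | p in [set p : V * V | X p.1 /\ X p.2]].
Definition vi_DX (X : set V) : R := Num.sqrt (vi_DX2 X).
Definition vi_BH (X : set V) (F H : V -> V) : R := sup [set vi_enorm (H x) | x in vi_SOL X F].
Definition vi_CH (X : set V) (H : V -> V) : R := sup [set vi_enorm (H x) | x in X].

Definition vi_weakly_sharp (X : set V) (F : V -> V) (alpha M : R) : Prop :=
  0 < alpha /\ 1 <= M /\
  forall x xs, X x -> vi_SOL X F xs ->
    alpha * (vi_dist x (vi_SOL X F)) `^ M <= vi_dotv (F xs) (x - xs).

Definition vi_ybar (y : nat -> V) (K : nat) : V :=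
  K%:R^-1 *: \sum_(k < K) y k.+1.
End Defs.

(* Main.v *)
Require Import Defs.
From mathcomp Require Import all_boot all_order all_algebra.
From mathcomp Require Import all_classical all_reals all_analysis.
From mathcomp Require Import lra ring.
Import Order.TTheory GRing.Theory Num.Theory.
Local Open Scope classical_set_scope.
Local Open Scope ring_scope.


Section VIlemmas.
Context {R : realType} {n : nat}.
Local Notation V := 'rV[R]_n.
Local Notation dot := (@vi_dotv R n).
Local Notation nrm := (@vi_enorm R n).

Lemma dotC (u v : V) : dot u v = dot v u.
Proof. by rewrite /vi_dotv; apply: eq_bigr => i _; rewrite mulrC. Qed.

Lemma dotDl (u v w : V) : dot (u + v) w = dot u w + dot v w.
Proof. by rewrite /vi_dotv -big_split; apply: eq_bigr => i _; rewrite mxE mulrDl. Qed.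

Lemma dotZl a (u v : V) : dot (a *: u) v = a * dot u v.
Proof. by rewrite /vi_dotv mulr_sumr; apply: eq_bigr => i _; rewrite mxE mulrA. Qed.

Lemma dotNl (u v : V) : dot (- u) v = - dot u v.
Proof. by rewrite -scaleN1r dotZl mulN1r. Qed.

Lemma dotDr (u v w : V) : dot w (u + v) = dot w u + dot w v.
Proof. by rewrite dotC dotDl !(dotC w). Qed.

Lemma dotZr a (u v : V) : dot v (a *: u) = a * dot v u.
Proof. by rewrite dotC dotZl dotC. Qed.

Lemma dotNr (u v : V) : dot v (- u) = - dot v u.
Proof. by rewrite dotC dotNl dotC. Qed.

Lemma dot0r (v : V) : dot v 0 = 0.
Proof. by rewrite /vi_dotv big1 // => i _; rewrite mxE mulr0. Qed.

Lemma dot_sumr (I : Type) (r : seq I) (P : pred I) (f : I -> V) (w : V) :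
  dot w (\sum_(i <- r | P i) f i) = \sum_(i <- r | P i) dot w (f i).
Proof. by elim/big_rec2: _ => [|i a b _ <-]; rewrite ?dot0r ?dotDr. Qed.

Lemma dotvv_ge0 (u : V) : 0 <= dot u u.
Proof. by apply: sumr_ge0 => i _; rewrite -expr2 sqr_ge0. Qed.

Lemma nrm_ge0 (u : V) : 0 <= nrm u.
Proof. exact: sqrtr_ge0. Qed.

Lemma nrm_sq (u : V) : nrm u ^+ 2 = dot u u.
Proof. exact: sqr_sqrtr (dotvv_ge0 u). Qed.

Lemma dotvv0 (u v : V) : dot u u = 0 -> dot u v = 0.
Proof.
move=> h.
have hn : forall j : 'I_n, true -> 0 <= u 0 j * u 0 j.
  by move=> j _; rewrite -expr2 sqr_ge0.
have h0 : forall i : 'I_n, u 0 i = 0.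
  move=> i; have /eqP := @psumr_eq0P _ _ (fun _ => true) _ hn h i isT.
  by rewrite mulf_eq0 orbb => /eqP.
by rewrite /vi_dotv big1 // => i _; rewrite h0 mul0r.
Qed.

Lemma nrm_le (u : V) c : 0 <= c -> dot u u <= c ^+ 2 -> nrm u <= c.
Proof.
move=> c0 h; rewrite /vi_enorm -(ger0_norm c0) -sqrtr_sqr.
exact: ler_wsqrtr.
Qed.

Lemma cs (u v : V) : dot u v <= nrm u * nrm v.
Proof.
have [a0|a0] := eqVneq (nrm u) 0.
  have : dot u u = 0 by rewrite -nrm_sq a0 expr2 mulr0.
  by move/(@dotvv0 u v) => ->; rewrite a0 mul0r.
have [b0|b0] := eqVneq (nrm v) 0.
  have : dot v v = 0 by rewrite -nrm_sq b0 expr2 mulr0.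
  by move/(@dotvv0 v u) => h; rewrite dotC h b0 mulr0.
have ap : 0 < nrm u by rewrite lt_def a0 nrm_ge0.
have bp : 0 < nrm v by rewrite lt_def b0 nrm_ge0.
have := dotvv_ge0 (nrm v *: u - nrm u *: v).
rewrite !(dotDl, dotDr, dotNl, dotNr, dotZl, dotZr) -!nrm_sq (dotC v u).
move=> h.
have h2 : 0 <= (nrm u * nrm v) * (nrm u * nrm v - dot u v) by lra.
by rewrite pmulr_rge0 ?mulr_gt0 // subr_ge0 in h2.
Qed.

Lemma nrmN (u : V) : nrm (- u) = nrm u.
Proof. by rewrite /vi_enorm dotNl dotNr opprK. Qed.

Lemma cs' (u v : V) : - (nrm u * nrm v) <= dot u v.
Proof. by rewrite lerNl -dotNl -(nrmN u) cs. Qed.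

Lemma nrm_triangle (u v : V) : nrm (u + v) <= nrm u + nrm v.
Proof.
apply: nrm_le; first by rewrite addr_ge0 ?nrm_ge0.
rewrite !(dotDl, dotDr) (dotC v u) -!nrm_sq.
have := cs u v; lra.
Qed.

Lemma nrmB_sym (u v : V) : nrm (u - v) = nrm (v - u).
Proof. by rewrite -nrmN opprB. Qed.

Lemma dotB_sym (u v : V) : dot (u - v) (u - v) = dot (v - u) (v - u).
Proof. by rewrite -!nrm_sq nrmB_sym. Qed.

End VIlemmas.


Section VI2.
Context {R : realType} {n : nat}.
Local Notation V := 'rV[R]_n.
Local Notation dot := (@vi_dotv R n).
Local Notation nrm := (@vi_enorm R n).

Lemma sq_le {a b : R} : 0 <= a -> a <= b -> a ^+ 2 <= b ^+ 2.
Proof. by move=> a0 ab; rewrite !expr2 ler_pM. Qed.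

Lemma lipsq {X : set V} {G L u v} : vi_lipschitz_on X G L -> X u -> X v ->
  dot (G u - G v) (G u - G v) <= L ^+ 2 * dot (u - v) (u - v).
Proof.
move=> hL Xu Xv; rewrite -!nrm_sq -exprMn.
exact: sq_le (nrm_ge0 _) (hL _ _ Xu Xv).
Qed.

Lemma proj_vi {X : set V} {w p z} : vi_convex_set X -> vi_is_proj X w p -> X z ->
  dot (w - p) (z - p) <= 0.
Proof.
move=> cvx [Xp hp] Xz.
have key : forall t, 0 < t -> t <= 1 ->
    2 * dot (w - p) (z - p) <= t * dot (z - p) (z - p).
  move=> t t0 t1.
  have Xq := cvx z p t Xz Xp (ltW t0) t1.
  have := hp _ Xq.
  have -> : w - (t *: z + (1 - t) *: p) = (w - p) - t *: (z - p).
    by apply/rowP => i; rewrite !mxE; ring.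
  move=> h; have := sq_le (nrm_ge0 _) h; rewrite !nrm_sq.
  move: (w - p) (z - p) => a c.
  rewrite !(dotDl, dotDr, dotNl, dotNr, dotZl, dotZr) (dotC c a).
  move=> h2.
  have h3 : t * (2 * dot a c) <= t * (t * dot c c) by lra.
  by rewrite ler_pM2l in h3.
rewrite leNgt; apply/negP => D0.
set D := dot (w - p) (z - p) in key D0 *.
set Z := dot (z - p) (z - p) in key.
have Z0 : 0 <= Z by exact: dotvv_ge0.
have DZ : 0 < D + Z by lra.
have := key (D / (D + Z)) (divr_gt0 D0 DZ).
rewrite ler_pdivrMr // mul1r => /(_ ltac:(lra)).
have -> : D / (D + Z) * Z = (D * Z) / (D + Z) by rewrite mulrAC.
rewrite ler_pdivlMr // => h.
have : D * D <= 0 by nra.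
by rewrite leNgt mulr_gt0.
Qed.

Lemma eg_step {X : set V} {x y xp z h1 h2 : V} : vi_convex_set X ->
  vi_is_proj X (x - h1) y -> vi_is_proj X (x - h2) xp -> X z ->
  dot (h2 - h1) (h2 - h1) <= dot (x - y) (x - y) ->
  2 * dot h2 (y - z) <= dot (x - z) (x - z) - dot (xp - z) (xp - z).
Proof.
move=> cvx P1 P2 Xz L.
have V1 := proj_vi cvx P1 P2.1.
have V2 := proj_vi cvx P2 Xz.
have E := dotvv_ge0 (h2 - h1 + (xp - y)).
move: V1 V2 E L; rewrite !(dotDl, dotDr, dotNl, dotNr).
move: (dotC x y) (dotC x xp) (dotC x z) (dotC x h1) (dotC x h2) (dotC y xp)
  (dotC y z) (dotC y h1) (dotC y h2) (dotC xp z) (dotC xp h1) (dotC xp h2)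
  (dotC z h1) (dotC z h2) (dotC h1 h2).
lra.
Qed.

Lemma gap_ub {x : V} {Y : set V} {G c} : Y !=set0 ->
  (forall z, Y z -> dot (G z) (x - z) <= c) -> vi_Gap x Y G <= c.
Proof.
move=> [z0 Yz0] h; apply: ge_sup; first by exists (dot (G z0) (x - z0)), z0.
by move=> _ [z Yz <-]; exact: h.
Qed.

Lemma gap_lb {x : V} {Y : set V} {G c z} : (forall z, Y z -> dot (G z) (x - z) <= c) ->
  Y z -> dot (G z) (x - z) <= vi_Gap x Y G.
Proof.
move=> hb Yz; apply: ub_le_sup; last by exists z.
by exists c => _ [w Yw <-]; exact: hb.
Qed.

Lemma dist_le {x : V} {Y : set V} {z} : Y z -> vi_dist x Y <= nrm (x - z).
Proof.
move=> Yz; apply: ge_inf; last by exists z.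
by exists 0 => _ [w _ <-]; exact: nrm_ge0.
Qed.

Lemma dist_ge0 (x : V) {Y : set V} : Y !=set0 -> 0 <= vi_dist x Y.
Proof.
move=> [z Yz]; apply: lb_le_inf; first by exists (nrm (x - z)), z.
by move=> _ [w _ <-]; exact: nrm_ge0.
Qed.

Lemma scale_dist {x : V} {Y : set V} {B g} : Y !=set0 -> 0 <= B ->
  (forall z, Y z -> g <= B * nrm (x - z)) -> g <= B * vi_dist x Y.
Proof.
move=> [z0 Yz0] B0 h; have [B00|Bn0] := eqVneq B 0.
  by have := h _ Yz0; rewrite B00 !mul0r.
have Bp : 0 < B by rewrite lt_def Bn0.
rewrite -ler_pdivrMl //; apply: lb_le_inf; first by exists (nrm (x - z0)), z0.
by move=> _ [w Yw <-]; rewrite ler_pdivrMl //; exact: h.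
Qed.

Lemma bnd_diff {X : set V} {M u v} : (forall x, X x -> nrm x <= M) -> X u -> X v ->
  nrm (u - v) <= M + M.
Proof.
move=> hM Xu Xv; apply: le_trans (nrm_triangle _ _) _.
by rewrite nrmN lerD // hM.
Qed.

Lemma lip_bnd {X : set V} {G L M x0} : (forall x, X x -> nrm x <= M) -> X x0 ->
  vi_lipschitz_on X G L -> forall z, X z -> nrm (G z) <= nrm (G x0) + `|L| * (M + M).
Proof.
move=> hM X0 hL z Xz.
have -> : G z = G x0 + (G z - G x0) by rewrite addrCA subrr addr0.
apply: le_trans (nrm_triangle _ _) _; rewrite lerD2l.
apply: le_trans (hL _ _ Xz X0) _.
apply: le_trans (ler_wpM2r (nrm_ge0 _) (ler_norm L)) _.
by rewrite ler_wpM2l ?normr_ge0 // (bnd_diff hM).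
Qed.

Lemma DX2_ub {X : set V} {M} : (forall x, X x -> nrm x <= M) ->
  forall u v, X u -> X v -> dot (u - v) (u - v) <= 2 * vi_DX2 X.
Proof.
move=> hM u v Xu Xv.
have hub : has_ubound [set 2^-1 * nrm (p.1 - p.2) ^+ 2 | p in [set p : V * V | X p.1 /\ X p.2]].
  exists (2^-1 * (M + M) ^+ 2) => _ [[a b] [Xa Xb] <-] /=.
  by rewrite ler_wpM2l ?invr_ge0 // sq_le ?nrm_ge0 // (bnd_diff hM).
have hm : [set 2^-1 * nrm (p.1 - p.2) ^+ 2 | p in [set p : V * V | X p.1 /\ X p.2]]
   (2^-1 * nrm (u - v) ^+ 2) by exists (u, v).
have := ub_le_sup hub hm.
rewrite nrm_sq /vi_DX2 => h; lra.
Qed.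

Lemma sup_nrm_ub {Y : set V} {G C} : (forall z, Y z -> nrm (G z) <= C) ->
  forall z, Y z -> nrm (G z) <= sup [set nrm (G x) | x in Y].
Proof.
move=> h z Yz; apply: ub_le_sup; last by exists z.
by exists C => _ [w Yw <-]; exact: h.
Qed.

Lemma ybar_dot (y : nat -> V) K (w z : V) : (0 < K)%N ->
  dot w (vi_ybar y K - z) = K%:R^-1 * \sum_(k < K) dot w (y k.+1 - z).
Proof.
move=> K0; have Kn : K%:R != 0 :> R by rewrite pnatr_eq0 -lt0n.
rewrite /vi_ybar dotDr dotNr dotZr dot_sumr.
have -> : \sum_(k < K) dot w (y k.+1 - z) = \sum_(k < K) (dot w (y k.+1) - dot w z).
  by apply: eq_bigr => k _; rewrite dotDr dotNr.
rewrite sumrB sumr_const card_ord -(mulr_natl (dot w z) K) mulrBr mulrA mulVf //.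
by rewrite mul1r.
Qed.

Lemma ybar_in {X : set V} {y : nat -> V} {K} : vi_convex_set X ->
  (forall k, X (y k.+1)) -> (0 < K)%N -> X (vi_ybar y K).
Proof.
move=> cvx Xy; elim: K => // K IH _.
case: K IH => [_|K IH].
  by rewrite /vi_ybar big_ord1 invr1 scale1r; exact: Xy.
have -> : vi_ybar y K.+2 = (K.+1%:R / K.+2%:R) *: vi_ybar y K.+1
     + (1 - K.+1%:R / K.+2%:R) *: y K.+2.
  rewrite /vi_ybar big_ord_recr /=; set S := \sum_(k < K.+1) y k.+1.
  have h1 : K.+1%:R != 0 :> R by rewrite pnatr_eq0.
  have h2 : K.+2%:R != 0 :> R by rewrite pnatr_eq0.
  have e : K.+2%:R = K.+1%:R + 1 :> R by rewrite -natr1.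
  rewrite e in h2 *; move: (K.+1%:R) h1 h2 => a h1 h2.
  by apply/rowP => i; rewrite !mxE; field; rewrite h1 h2.
apply: cvx; [exact: IH | exact: Xy | by rewrite divr_ge0 |].
by rewrite ler_pdivrMr ?ltr0n // mul1r ler_nat.
Qed.

Lemma tele (a : nat -> R) K : \sum_(k < K) (a k - a k.+1) = a 0%N - a K.
Proof.
elim: K => [|K IH]; first by rewrite big_ord0 subrr.
by rewrite big_ord_recr /= IH addrA subrK.
Qed.

Lemma tele_w (c a : nat -> R) A K : (forall k, 0 <= a k <= A) ->
  (forall k, c k <= c k.+1) -> (forall k, 0 <= c k) ->
  \sum_(k < K.+1) c k * (a k - a k.+1) <= c K * A.
Proof.
move=> ha hc c0.
suff : \sum_(k < K.+1) c k * (a k - a k.+1) + c K * a K.+1 <= c K * A.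
  have := mulr_ge0 (c0 K) (andP (ha K.+1)).1; lra.
elim: K => [|K IH].
  rewrite big_ord_recr big_ord0 /= add0r -mulrDr subrK.
  by rewrite ler_wpM2l // (andP (ha 0%N)).2.
rewrite big_ord_recr /=.
have h1 : (c K.+1 - c K) * a K.+1 <= (c K.+1 - c K) * A.
  by apply: ler_wpM2l; [rewrite subr_ge0 | exact: (andP (ha _)).2].
lra.
Qed.

Lemma pow_step b (j : R) : 0 < b -> b < 1 -> 1 <= j ->
  (1 - b) / j `^ b <= j `^ (1 - b) - (j - 1) `^ (1 - b).
Proof.
move=> b0 b1 j1.
have j0 : 0 < j by lra.
have b1' : 0 < 1 - b by lra.
have P0 : 0 < j `^ b by rewrite powR_gt0.
have Y := @conjugate_powR R ((j - 1) `^ (1 - b)) (j `^ b) (1 - b)^-1 b^-1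
  (powR_ge0 _ _) (powR_ge0 _ _) ltac:(by rewrite invr_gt0) ltac:(by rewrite invr_gt0)
  ltac:(rewrite !invrK; lra).
rewrite -!powRrM !mulfV ?gt_eqF // in Y.
rewrite !powRr1 in Y; [|exact: ltW|by rewrite subr_ge0].
have e1 : forall u v : R, u / v^-1 = u * v by move=> u v; rewrite invrK.
rewrite !e1 in Y.
have -> : j `^ (1 - b) = j / j `^ b.
  by rewrite powRB ?powRr1 ?(ltW j0) //; apply/implyP => _; rewrite gt_eqF.
have -> : (j - 1) `^ (1 - b) = ((j - 1) `^ (1 - b) * j `^ b) / j `^ b.
  by rewrite mulfK // gt_eqF.
rewrite -mulrBl ler_pM2r ?invr_gt0 //.
lra.
Qed.

Lemma pow_sum b K : 0 < b -> b < 1 ->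
  \sum_(k < K) (k.+1%:R `^ b)^-1 <= K%:R `^ (1 - b) / (1 - b) :> R.
Proof.
move=> b0 b1; have b1' : 0 < 1 - b by lra.
elim: K => [|K IH].
  by rewrite big_ord0 divr_ge0 ?powR_ge0 // ltW.
rewrite big_ord_recr /=.
have e : K.+1%:R - 1 = K%:R :> R by rewrite -natr1 addrK.
have := @pow_step b K.+1%:R b0 b1 ltac:(by rewrite ler1n).
rewrite e => h.
have h' : (K.+1%:R `^ b)^-1 <= (K.+1%:R `^ (1 - b) - K%:R `^ (1 - b)) / (1 - b).
  by rewrite ler_pdivlMr // mulrC.
move: IH h'; rewrite !mulrBl; lra.
Qed.

End VI2.

Local Notation nrm := vi_enorm.
Local Notation dot := vi_dotv.

Theorem theorem3p5 (R : realType) (n : nat) (X : set 'rV[R]_n)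
  (F H : 'rV[R]_n -> 'rV[R]_n) (LF LH gamma : R) (eta : nat -> R)
  (x y : nat -> 'rV[R]_n) :
  X !=set0 -> vi_closed X -> vi_convex_set X -> vi_bounded X ->
  vi_lipschitz_on X F LF -> vi_monotone_on X F ->
  vi_lipschitz_on X H LH -> vi_monotone_on X H ->
  vi_SOL (vi_SOL X F) H !=set0 ->
  0 < gamma -> (forall k, 0 < eta k) -> X (x 0%N) ->
  (forall k, vi_is_proj X (x k - gamma *: (F (x k) + eta k *: H (x k))) (y k.+1)) ->
  (forall k, vi_is_proj X (x k - gamma *: (F (y k.+1) + eta k *: H (y k.+1))) (x k.+1)) ->
  gamma ^+ 2 * (LF ^+ 2 + eta 0%N ^+ 2 * LH ^+ 2) <= 2^-1 ->
  (* Case 1: diminishing regularization *)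
  (forall b : R, 0 < b -> b < 1 ->
     (forall k : nat, eta k = eta 0%N / (k.+1%:R `^ b)) ->
     forall K : nat, 2 `^ (1 - b)^-1 <= K%:R ->
       [/\ - vi_BH X F H * vi_dist (vi_ybar y K) (vi_SOL X F) <= vi_Gap (vi_ybar y K) (vi_SOL X F) H,
           vi_Gap (vi_ybar y K) (vi_SOL X F) H
             <= vi_DX2 X / (gamma * eta 0%N) * (K%:R `^ (1 - b))^-1,
           0 <= vi_Gap (vi_ybar y K) X F,
           vi_Gap (vi_ybar y K) X F
             <= vi_DX2 X / gamma * K%:R^-1
                + Num.sqrt 2 * eta 0%N * vi_CH X H * vi_DX X / (1 - b) * (K%:R `^ b)^-1
         & forall alpha M : R, vi_weakly_sharp X F alpha M ->
             - vi_BH X F H *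
               (alpha^-1 * (vi_DX2 X / gamma * K%:R^-1
                  + Num.sqrt 2 * vi_CH X H * vi_DX X * eta 0%N / (1 - b) * (K%:R `^ b)^-1))
               `^ M^-1
             <= vi_Gap (vi_ybar y K) (vi_SOL X F) H]) /\
  (* Case 2: constant regularization *)
  (forall alpha : R, vi_weakly_sharp X F alpha 1 ->
     forall etac : R, (forall k, eta k = etac) ->
     forall xs, vi_SOL (vi_SOL X F) H xs ->
       2 * etac * vi_enorm (H xs) <= alpha ->
       forall K : nat, (1 <= K)%N ->
         vi_dist (vi_ybar y K) (vi_SOL X F)
           <= vi_enorm (x 0%N - xs) ^+ 2 / (gamma * alpha) * K%:R^-1 /\
         `| vi_Gap (vi_ybar y K) (vi_SOL X F) H |
           <= Num.max (vi_DX2 X / (gamma * etac))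
                      (vi_BH X F H * vi_enorm (x 0%N - xs) ^+ 2 / (gamma * alpha))
              * K%:R^-1).
Proof.
move=> X0 Xcl cvx [M hM] LipF monF LipH monH SS0 g0 etap Xx0 Py Px cond.
set S := vi_SOL X F.
have Xx : forall k, X (x k) by elim => // k _; exact: (Px k).1.
have Xy : forall k, X (y k.+1) := fun k => (Py k).1.
have SX : forall z, S z -> X z by move=> z [].
case: SS0 => xs0 [Sxs0 _].
have S0 : S !=set0 by exists xs0.
have bF := lip_bnd hM (Xx 0%N) LipF.
have bH := lip_bnd hM (Xx 0%N) LipH.
set CF := nrm (F (x 0%N)) + `|LF| * (M + M) in bF.
set CH0 := nrm (H (x 0%N)) + `|LH| * (M + M) in bH.
have DD := DX2_ub hM.
have D2ge0 : 0 <= vi_DX2 X.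
  by have := DD _ _ (Xx 0%N) (Xx 0%N); rewrite subrr dot0r; lra.
have gapF : forall xb z, X xb -> X z -> vi_dotv (F z) (xb - z) <= CF * (M + M).
  move=> xb z Xb Xz; apply: le_trans (cs _ _) _.
  by apply: ler_pM; rewrite ?nrm_ge0 ?bF // (bnd_diff hM).
have gapH : forall xb z, X xb -> X z -> vi_dotv (H z) (xb - z) <= CH0 * (M + M).
  move=> xb z Xb Xz; apply: le_trans (cs _ _) _.
  by apply: ler_pM; rewrite ?nrm_ge0 ?bH // (bnd_diff hM).
have hBH : forall z, S z -> nrm (H z) <= vi_BH X F H.
  exact: sup_nrm_ub (fun z Sz => bH z (SX z Sz)).
have BH0 : 0 <= vi_BH X F H := le_trans (nrm_ge0 _) (hBH _ Sxs0).
have hCH : forall z, X z -> nrm (H z) <= vi_CH X H.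
  exact: sup_nrm_ub bH.
have CH0ge : 0 <= vi_CH X H := le_trans (nrm_ge0 _) (hCH _ (Xx 0%N)).
have step : forall k z, gamma ^+ 2 * (LF ^+ 2 + eta k ^+ 2 * LH ^+ 2) <= 2^-1 -> X z ->
   2 * gamma * (vi_dotv (F (y k.+1)) (y k.+1 - z) + eta k * vi_dotv (H (y k.+1)) (y k.+1 - z))
   <= vi_dotv (x k - z) (x k - z) - vi_dotv (x k.+1 - z) (x k.+1 - z).
  move=> k z ck Xz.
  set yk := y k.+1; set xk := x k.
  have L : vi_dotv (gamma *: (F yk + eta k *: H yk) - gamma *: (F xk + eta k *: H xk))
                   (gamma *: (F yk + eta k *: H yk) - gamma *: (F xk + eta k *: H xk))
           <= vi_dotv (xk - yk) (xk - yk).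
    have -> : gamma *: (F yk + eta k *: H yk) - gamma *: (F xk + eta k *: H xk)
        = gamma *: ((F yk - F xk) + eta k *: (H yk - H xk)).
      by apply/rowP => i; rewrite !mxE; ring.
    rewrite dotZl dotZr (dotB_sym xk yk).
    have hF := lipsq LipF (Xy k) (Xx k).
    have hH := lipsq LipH (Xy k) (Xx k).
    have Q0 := dotvv_ge0 (yk - xk).
    move: hF hH Q0; rewrite -/yk -/xk.
    move: (F yk - F xk) (H yk - H xk) (yk - xk) => dF dH Q hF hH Q0.
    have hs := dotvv_ge0 (dF - eta k *: dH).
    move: hs; rewrite !(dotDl, dotDr, dotNl, dotNr, dotZl, dotZr) (dotC dH dF) => hs.
    have hH' : eta k ^+ 2 * vi_dotv dH dH <= eta k ^+ 2 * (LH ^+ 2 * vi_dotv Q Q).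
      by rewrite ler_wpM2l ?sqr_ge0.
    set c := LF ^+ 2 + eta k ^+ 2 * LH ^+ 2 in ck.
    have hDD : vi_dotv dF dF + eta k * vi_dotv dF dH + eta k * (vi_dotv dF dH + eta k * vi_dotv dH dH)
        <= 2 * c * vi_dotv Q Q.
      rewrite /c; move: hH'; rewrite !expr2 => hH'; move: hF; rewrite !expr2 => hF'; lra.
    have h1 : gamma ^+ 2 * (vi_dotv dF dF + eta k * vi_dotv dF dH + eta k * (vi_dotv dF dH + eta k * vi_dotv dH dH))
        <= gamma ^+ 2 * (2 * c * vi_dotv Q Q) by rewrite ler_wpM2l ?sqr_ge0.
    have h2 : (2 * (gamma ^+ 2 * c)) * vi_dotv Q Q <= 1 * vi_dotv Q Q.
      by apply: ler_wpM2r => //; lra.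
    move: h1 h2; rewrite !expr2 => h1 h2; lra.
  have := eg_step cvx (Py k) (Px k) Xz L.
  rewrite dotZl dotDl dotZl; lra.

have hkS : forall k z, gamma ^+ 2 * (LF ^+ 2 + eta k ^+ 2 * LH ^+ 2) <= 2^-1 -> S z ->
   2 * gamma * eta k * dot (H z) (y k.+1 - z)
   <= dot (x k - z) (x k - z) - dot (x k.+1 - z) (x k.+1 - z).
  move=> k z ck Sz.
  have st := step k z ck (SX z Sz).
  have f0 : 0 <= dot (F (y k.+1)) (y k.+1 - z).
    have := monF _ _ (Xy k) (SX z Sz); rewrite dotDl dotNl.
    have := Sz.2 _ (Xy k); lra.
  have hh : eta k * dot (H z) (y k.+1 - z) <= eta k * dot (H (y k.+1)) (y k.+1 - z).
    rewrite ler_wpM2l ?(ltW (etap k)) //.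
    have := monH _ _ (Xy k) (SX z Sz); rewrite dotDl dotNl; lra.
  have h2 : 2 * gamma * (eta k * dot (H z) (y k.+1 - z))
      <= 2 * gamma * (dot (F (y k.+1)) (y k.+1 - z) + eta k * dot (H (y k.+1)) (y k.+1 - z)).
    rewrite ler_pM2l ?mulr_gt0 //; lra.
  lra.
have hkX : forall k z, gamma ^+ 2 * (LF ^+ 2 + eta k ^+ 2 * LH ^+ 2) <= 2^-1 -> X z ->
   2 * gamma * dot (F z) (y k.+1 - z)
   <= dot (x k - z) (x k - z) - dot (x k.+1 - z) (x k.+1 - z)
      + 2 * gamma * (eta k * (vi_CH X H * Num.sqrt (2 * vi_DX2 X))).
  move=> k z ck Xz.
  have st := step k z ck Xz.
  have ff : dot (F z) (y k.+1 - z) <= dot (F (y k.+1)) (y k.+1 - z).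
    have := monF _ _ (Xy k) Xz; rewrite dotDl dotNl; lra.
  have hq : - dot (H (y k.+1)) (y k.+1 - z) <= vi_CH X H * Num.sqrt (2 * vi_DX2 X).
    rewrite -dotNr opprB; apply: le_trans (cs _ _) _.
    apply: ler_pM; rewrite ?nrm_ge0 ?hCH //.
    by rewrite /vi_enorm; apply: ler_wsqrtr; exact: DD.
  have hq' : eta k * (- dot (H (y k.+1)) (y k.+1 - z))
      <= eta k * (vi_CH X H * Num.sqrt (2 * vi_DX2 X)).
    by rewrite ler_wpM2l ?(ltW (etap k)).
  have h2 : 2 * gamma * dot (F z) (y k.+1 - z) <= 2 * gamma * dot (F (y k.+1)) (y k.+1 - z).
    by rewrite ler_pM2l ?mulr_gt0.
  have h3 : 2 * gamma * (eta k * (- dot (H (y k.+1)) (y k.+1 - z)))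
      <= 2 * gamma * (eta k * (vi_CH X H * Num.sqrt (2 * vi_DX2 X))).
    by rewrite ler_pM2l ?mulr_gt0.
  lra.
have Xyb : forall K, (1 <= K)%N -> X (vi_ybar y K) := fun K K1 => ybar_in cvx Xy K1.
have gap_lower : forall xb, X xb -> - vi_BH X F H * vi_dist xb S <= vi_Gap xb S H.
  move=> xb Xb; rewrite mulNr lerNl; apply: (scale_dist S0 BH0) => z Sz.
  have g1 := gap_lb (fun w Sw => gapH xb w Xb (SX w Sw)) Sz.
  have g2 := cs' (H z) (xb - z).
  have g3 : nrm (H z) * nrm (xb - z) <= vi_BH X F H * nrm (xb - z).
    by rewrite ler_wpM2r ?nrm_ge0 ?hBH.
  lra.
split.
- move=> b b0 b1 etaE K HK.
  have K1 : (1 <= K)%N.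
    have h2 : 2 `^ 0 <= 2 `^ (1 - b)^-1 :> R.
      by apply: ler_powR; [lra | rewrite invr_ge0; lra].
    rewrite powRr0 in h2.
    by have := le_trans h2 HK; rewrite ler1n.
  have Kp : 0 < K%:R :> R by rewrite ltr0n.
  have Pge1 : forall k, 1 <= k.+1%:R `^ b.
    move=> k; have h : k.+1%:R `^ 0 <= k.+1%:R `^ b :> R.
      by apply: ler_powR; rewrite ?ler1n // ltW.
    by rewrite powRr0 in h.
  have Pgt0 : forall k, 0 < k.+1%:R `^ b.
    by move=> k; exact: lt_le_trans (Pge1 k).
  have eta_le : forall k, eta k <= eta 0%N.
    by move=> k; rewrite etaE ler_pdivrMr // ler_peMr // ltW.
  have ck : forall k, gamma ^+ 2 * (LF ^+ 2 + eta k ^+ 2 * LH ^+ 2) <= 2^-1.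
    move=> k; apply: le_trans cond; rewrite ler_wpM2l ?sqr_ge0 // lerD2l.
    rewrite ler_wpM2r ?sqr_ge0 //.
    exact: sq_le (ltW (etap k)) (eta_le k).
  have KE : K%:R `^ (1 - b) = K%:R / K%:R `^ b.
    rewrite powRB ?powRr1 ?ler0n //.
    by apply/implyP => _; rewrite pnatr_eq0 -lt0n.
  have KbP : 0 < K%:R `^ b by rewrite powR_gt0.
  have e0 : 0 < eta 0%N := etap 0%N.
  set yb := vi_ybar y K.
  have Xb := Xyb K K1.
  have up2 : vi_Gap yb X F <= vi_DX2 X / gamma * K%:R^-1
      + Num.sqrt 2 * eta 0%N * vi_CH X H * vi_DX X / (1 - b) * (K%:R `^ b)^-1.
    apply: (gap_ub X0) => z Xz.
    rewrite ybar_dot //.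
    set Q := vi_CH X H * Num.sqrt (2 * vi_DX2 X).
    have Q0 : 0 <= Q by rewrite mulr_ge0 ?sqrtr_ge0.
    have hs : \sum_(k < K) dot (F z) (y k.+1 - z)
       <= \sum_(k < K) ((2 * gamma)^-1 * (dot (x k - z) (x k - z) - dot (x k.+1 - z) (x k.+1 - z))
                        + eta k * Q).
      apply: ler_sum => k _.
      have hk := hkX k z (ck k) Xz.
      by rewrite -(ler_pM2l (_ : 0 < 2 * gamma)) ?mulr_gt0 // mulrDr mulrA mulfV ?mul1r ?gt_eqF ?mulr_gt0 //; lra.
    rewrite big_split /= -mulr_sumr (tele (fun k => dot (x k - z) (x k - z))) -mulr_suml in hs.
    have s1 : \sum_(k < K) eta k <= eta 0%N * (K%:R `^ (1 - b) / (1 - b)).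
      under eq_bigr => k _ do rewrite etaE.
      rewrite -mulr_sumr ler_wpM2l ?(ltW e0) //; exact: pow_sum.
    have a0 := DD _ _ (Xx 0%N) Xz.
    have aK := dotvv_ge0 (x K - z).
    have t1 : (2 * gamma)^-1 * (dot (x 0%N - z) (x 0%N - z) - dot (x K - z) (x K - z))
        <= (2 * gamma)^-1 * (2 * vi_DX2 X).
      rewrite ler_wpM2l ?invr_ge0 ?mulr_ge0 ?(ltW g0) //; lra.
    have t2 : (\sum_(k < K) eta k) * Q <= (eta 0%N * (K%:R `^ (1 - b) / (1 - b))) * Q.
      by rewrite ler_wpM2r.
    have t3 : K%:R^-1 * \sum_(k < K) dot (F z) (y k.+1 - z)
        <= K%:R^-1 * ((2 * gamma)^-1 * (2 * vi_DX2 X)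
                      + (eta 0%N * (K%:R `^ (1 - b) / (1 - b))) * Q).
      rewrite ler_wpM2l ?invr_ge0 ?ler0n //; lra.
    apply: le_trans t3 _; rewrite le_eqVlt; apply/orP; left; apply/eqP.
    rewrite /Q /vi_DX sqrtrM ?ler0n // KE.
    have hb : 1 - b != 0 by rewrite subr_eq0 gt_eqF.
    by field; rewrite hb !gt_eqF.
  have up1 : vi_Gap yb S H <= vi_DX2 X / (gamma * eta 0%N) * (K%:R `^ (1 - b))^-1.
    apply: (gap_ub S0) => z Sz.
    rewrite ybar_dot //.
    have hs : \sum_(k < K) dot (H z) (y k.+1 - z)
        <= (2 * gamma)^-1 * (K%:R `^ b / eta 0%N * (2 * vi_DX2 X)).
      rewrite -(prednK K1); set K' := K.-1.
      apply: le_trans (_ : \sum_(k < K'.+1) (2 * gamma)^-1 * ((eta k)^-1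
           * (dot (x k - z) (x k - z) - dot (x k.+1 - z) (x k.+1 - z))) <= _).
        apply: ler_sum => k _.
        rewrite ler_pdivlMl ?mulr_gt0 // ler_pdivlMl //.
        have := hkS k z (ck k) Sz; lra.
      rewrite -mulr_sumr ler_wpM2l ?invr_ge0 ?mulr_ge0 ?(ltW g0) //.
      have ha : forall k, 0 <= dot (x k - z) (x k - z) <= 2 * vi_DX2 X.
        by move=> k; apply/andP; split; [exact: dotvv_ge0 | exact: DD (Xx k) (SX _ Sz)].
      have hc : forall k, (eta k)^-1 <= (eta k.+1)^-1.
        move=> k; rewrite (etaE k) (etaE k.+1) !invf_div ler_wpM2r ?invr_ge0 ?(ltW e0) //.
        by rewrite ge0_ler_powR ?(ltW b0) ?nnegrE ?ler0n ?ler_nat.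
      have hc0 : forall k, 0 <= (eta k)^-1 by move=> k; rewrite invr_ge0 ltW.
      have tw := tele_w (fun k => (eta k)^-1) (fun k => dot (x k - z) (x k - z))
                (2 * vi_DX2 X) K' ha hc hc0.
      have cK : (eta K')^-1 = K'.+1%:R `^ b / eta 0%N by rewrite etaE invf_div.
      apply: le_trans tw _; change ((eta K')^-1 * (2 * vi_DX2 X) <= K'.+1%:R `^ b / eta 0%N * (2 * vi_DX2 X)); by rewrite cK.
    have t3 : K%:R^-1 * \sum_(k < K) dot (H z) (y k.+1 - z)
        <= K%:R^-1 * ((2 * gamma)^-1 * (K%:R `^ b / eta 0%N * (2 * vi_DX2 X))).
      by rewrite ler_wpM2l ?invr_ge0 ?ler0n.
    apply: le_trans t3 _; rewrite le_eqVlt; apply/orP; left; apply/eqP.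
    rewrite KE invf_div.
    by field; rewrite !gt_eqF.
  split.
  + exact: gap_lower yb Xb.
  + exact: up1.
  + have := gap_lb (fun w Xw => gapF yb w Xb Xw) Xb.
    by rewrite subrr dot0r.
  + exact: up2.
  + move=> al Mw [al0 [M1 hws]].
    have eB : vi_DX2 X / gamma * K%:R^-1
          + Num.sqrt 2 * vi_CH X H * vi_DX X * eta 0%N / (1 - b) * (K%:R `^ b)^-1
        = vi_DX2 X / gamma * K%:R^-1
          + Num.sqrt 2 * eta 0%N * vi_CH X H * vi_DX X / (1 - b) * (K%:R `^ b)^-1.
      by ring.
    rewrite eB.
    set B1 := vi_DX2 X / gamma * K%:R^-1
          + Num.sqrt 2 * eta 0%N * vi_CH X H * vi_DX X / (1 - b) * (K%:R `^ b)^-1 in up2 *.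
    set d := vi_dist yb S.
    have d0 : 0 <= d := dist_ge0 yb S0.
    have hw := hws yb xs0 Xb Sxs0.
    have g := gap_lb (fun w Xw => gapF yb w Xb Xw) (SX _ Sxs0).
    have hdM : d `^ Mw <= al^-1 * B1.
      rewrite ler_pdivlMl //; lra.
    have Mp : 0 < Mw by lra.
    have hd : d <= (al^-1 * B1) `^ Mw^-1.
      have e : d = (d `^ Mw) `^ Mw^-1 by rewrite -powRrM mulfV ?gt_eqF ?powRr1.
      rewrite {1}e; apply: ge0_ler_powR; rewrite ?nnegrE ?invr_ge0 ?powR_ge0 ?(ltW Mp) //.
      exact: le_trans (powR_ge0 _ _) hdM.
    have := gap_lower yb Xb.
    have := ler_wpM2l BH0 hd.
    rewrite -/d; lra.
- move=> al [al0 [_ hws]] etac etaC xs [Sxs hxs] hsmall K K1.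
  have ck : forall k, gamma ^+ 2 * (LF ^+ 2 + eta k ^+ 2 * LH ^+ 2) <= 2^-1.
    by move=> k; rewrite (etaC k) -(etaC 0%N).
  have Kp : 0 < K%:R :> R by rewrite ltr0n.
  have etac0 : 0 < etac by rewrite -(etaC 0%N).
  set yb := vi_ybar y K.
  have Xb := Xyb K K1.
  set d := vi_dist yb S.
  have d0 : 0 <= d := dist_ge0 yb S0.
  have hd : d <= nrm (x 0%N - xs) ^+ 2 / (gamma * al) * K%:R^-1.
    rewrite nrm_sq -mulrA -invfM ler_pdivlMr ?mulr_gt0 //.
    have sumI : \sum_(k < K) (2 * gamma * (dot (F xs) (y k.+1 - xs)
                     + etac * dot (H xs) (y k.+1 - xs)))
        <= \sum_(k < K) (dot (x k - xs) (x k - xs) - dot (x k.+1 - xs) (x k.+1 - xs)).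
      apply: ler_sum => k _.
      have st := step k xs (ck k) (SX _ Sxs); rewrite etaC in st.
      have f1 : dot (F xs) (y k.+1 - xs) <= dot (F (y k.+1)) (y k.+1 - xs).
        have := monF _ _ (Xy k) (SX _ Sxs); rewrite dotDl dotNl; lra.
      have h1 : etac * dot (H xs) (y k.+1 - xs) <= etac * dot (H (y k.+1)) (y k.+1 - xs).
        rewrite ler_wpM2l ?(ltW etac0) //.
        have := monH _ _ (Xy k) (SX _ Sxs); rewrite dotDl dotNl; lra.
      have : 2 * gamma * (dot (F xs) (y k.+1 - xs) + etac * dot (H xs) (y k.+1 - xs))
          <= 2 * gamma * (dot (F (y k.+1)) (y k.+1 - xs) + etac * dot (H (y k.+1)) (y k.+1 - xs)).
        rewrite ler_pM2l ?mulr_gt0 //; lra.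
      lra.
    rewrite (tele (fun k => dot (x k - xs) (x k - xs))) -mulr_sumr big_split /= -mulr_sumr in sumI.
    have Fb := ybar_dot y K (F xs) xs K1.
    have Hb := ybar_dot y K (H xs) xs K1.
    have Flow : al * d <= dot (F xs) (yb - xs).
      by have := hws yb xs Xb Sxs; rewrite powRr1.
    have Hlow : - (nrm (H xs) * d) <= dot (H xs) (yb - xs).
      rewrite lerNl; apply: (scale_dist S0 (nrm_ge0 _)) => p Sp.
      have e : dot (H xs) (yb - xs) = dot (H xs) (yb - p) + dot (H xs) (p - xs).
        by rewrite -dotDr addrA subrK.
      have := hxs p Sp; have := cs' (H xs) (yb - p); lra.
    have he : etac * (nrm (H xs) * d) <= al / 2 * d.
      by rewrite mulrA ler_wpM2r //; lra.
    have Hlow' : etac * (- (nrm (H xs) * d)) <= etac * dot (H xs) (yb - xs).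
      by rewrite ler_wpM2l ?(ltW etac0).
    set sF := \sum_(k < K) dot (F xs) (y k.+1 - xs) in sumI Fb.
    set sH := \sum_(k < K) dot (H xs) (y k.+1 - xs) in sumI Hb.
    have m : (2 * gamma * K%:R) * (al / 2 * d)
        <= (2 * gamma * K%:R) * (dot (F xs) (yb - xs) + etac * dot (H xs) (yb - xs)).
      rewrite ler_wpM2l ?mulr_ge0 ?ler0n ?(ltW g0) //; lra.
    have eK : (2 * gamma * K%:R) * (K%:R^-1 * sF + etac * (K%:R^-1 * sH))
        = 2 * gamma * (sF + etac * sH).
      by field; rewrite gt_eqF.
    rewrite Fb Hb in m.
    have := dotvv_ge0 (x K - xs).
    lra.
  split; first exact: hd.
  have upG : vi_Gap yb S H <= vi_DX2 X / (gamma * etac) * K%:R^-1.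
    apply: (gap_ub S0) => z Sz; rewrite ybar_dot //.
    have sumI : \sum_(k < K) (2 * gamma * etac * dot (H z) (y k.+1 - z))
        <= \sum_(k < K) (dot (x k - z) (x k - z) - dot (x k.+1 - z) (x k.+1 - z)).
      by apply: ler_sum => k _; rewrite -(etaC k); exact: hkS k z (ck k) Sz.
    rewrite (tele (fun k => dot (x k - z) (x k - z))) -mulr_sumr in sumI.
    rewrite [X in _ <= X]mulrC ler_wpM2l ?invr_ge0 ?ler0n //.
    rewrite ler_pdivlMr ?mulr_gt0 //.
    have := DD _ _ (Xx 0%N) (SX _ Sz); have := dotvv_ge0 (x K - z).
    lra.
  have lowG := gap_lower yb Xb.
  have hd' : - vi_BH X F H * (nrm (x 0%N - xs) ^+ 2 / (gamma * al) * K%:R^-1)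
      <= - vi_BH X F H * d.
    by rewrite !mulNr lerN2 ler_wpM2l.
  have m1 : vi_DX2 X / (gamma * etac) * K%:R^-1
      <= Num.max (vi_DX2 X / (gamma * etac))
           (vi_BH X F H * nrm (x 0%N - xs) ^+ 2 / (gamma * al)) * K%:R^-1.
    by rewrite ler_wpM2r ?invr_ge0 ?ler0n // le_max lexx.
  have m2 : vi_BH X F H * nrm (x 0%N - xs) ^+ 2 / (gamma * al) * K%:R^-1
      <= Num.max (vi_DX2 X / (gamma * etac))
           (vi_BH X F H * nrm (x 0%N - xs) ^+ 2 / (gamma * al)) * K%:R^-1.
    by rewrite ler_wpM2r ?invr_ge0 ?ler0n // le_max lexx orbT.
  rewrite ler_norml; apply/andP; split; last by apply: le_trans upG m1.
  move: m2 hd' lowG; rewrite !mulrA; lra.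
Qed.
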